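(* Let $\gamma\in[0,1)$ and $\Omega_{\gamma}=\{z\in\mathbb{C}:|z+\frac{\gamma}{1-\gamma}|<\frac{1}{1-\gamma}\}$. Let $f$ be analytic in $\Omega_\gamma$ with $|f(z)|\le1$ on $\Omega_\gamma$ and $f(z)=\sum_{n=0}^\infty a_n\left(z+\frac{\gamma}{1-\gamma}\right)^n$ in $\Omega_\gamma$. Then $$\sum_{n=0}^\infty \frac{|a_n|}{(1-\gamma)^n}\rho^n+\left(\frac{1}{1+|a_0|}+\frac{\rho}{1-\rho}\right)\sum_{n=1}^\infty\frac{|a_n|^2}{(1-\gamma)^{2n}}\rho^{2n}\le 1$$ for $|(1-\gamma)z+\gamma|=\rho\le\rho_0=1/3$. The number $\rho_0=1/3$ is best possible, i.e. for every $\rho\in(1/3,1)$ there is such a function $f$ for which the left-hand side exceeds $1$.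
   Context: $\Omega_\gamma$ is the open disk centered at $-\gamma/(1-\gamma)$ of radius $1/(1-\gamma)$. *)

(* Defs.v *)
From Stdlib Require Import Reals.
From Coquelicot Require Export Coquelicot.
Open Scope R_scope.

Definition cen (g : R) : C := RtoC (- (g / (1 - g))).
Definition rad (g : R) : R := 1 / (1 - g).
Definition Omega (g : R) (z : C) : Prop := Cmod (z - cen g)%C < rad g.

Definition admissible (g : R) (f : C -> C) (a : nat -> C) : Prop :=
  (forall z, Omega g z -> is_series (fun n => (a n * pow_n (z - cen g) n)%C) (f z))
  /\ (forall z, Omega g z -> Cmod (f z) <= 1).

Definition lhs_is (g rho : R) (a : nat -> C) (L : R) : Prop :=
  exists S1 S2 : R,
    is_series (fun n => Cmod (a n) / (1 - g) ^ n * rho ^ n) S1 /\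
    is_series (fun n => Cmod (a (S n)) ^ 2 / (1 - g) ^ (2 * S n) * rho ^ (2 * S n)) S2 /\
    L = S1 + (1 / (1 + Cmod (a O)) + rho / (1 - rho)) * S2.

(* Main.v *)
Require Import Defs.
From Stdlib Require Import Reals.
From Coquelicot Require Import Coquelicot.
From Stdlib Require Import Lra Lia Psatz.
Open Scope R_scope.

Fixpoint csum (f : nat -> C) (n : nat) : C :=
  match n with O => RtoC 0 | S k => Cplus (csum f k) (f k) end.
Fixpoint rsum (f : nat -> R) (n : nat) : R :=
  match n with O => 0 | S k => rsum f k + f k end.

Lemma csum_ext f g n : (forall i, (i < n)%nat -> f i = g i) -> csum f n = csum g n.
Proof. induction n; intros H; cbn [csum rsum]; auto. rewrite IHn, H; auto. Qed.
Lemma rsum_ext f g n : (forall i, (i < n)%nat -> f i = g i) -> rsum f n = rsum g n.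
Proof. induction n; intros H; cbn [csum rsum]; auto. rewrite IHn, H; auto. Qed.
Lemma rsum_le f g n : (forall i, (i < n)%nat -> f i <= g i) -> rsum f n <= rsum g n.
Proof. induction n; intros H; cbn [csum rsum]. lra. assert (f n <= g n) by auto. assert (rsum f n <= rsum g n) by auto. lra. Qed.
Lemma rsum_nonneg f n : (forall i, (i < n)%nat -> 0 <= f i) -> 0 <= rsum f n.
Proof. induction n; intros H; cbn [csum rsum]. lra. assert (0 <= f n) by auto. assert (0<= rsum f n) by auto. lra. Qed.
Lemma csum_plus f g n : csum (fun i => f i + g i)%C n = (csum f n + csum g n)%C.
Proof. induction n; cbn [csum rsum]. ring. rewrite IHn; ring. Qed.
Lemma rsum_plus f g n : rsum (fun i => f i + g i) n = rsum f n + rsum g n.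
Proof. induction n; cbn [csum rsum]. ring. rewrite IHn; ring. Qed.
Lemma csum_scal c f n : csum (fun i => c * f i)%C n = (c * csum f n)%C.
Proof. induction n; cbn [csum rsum]. ring. rewrite IHn; ring. Qed.
Lemma rsum_scal c f n : rsum (fun i => c * f i) n = c * rsum f n.
Proof. induction n; cbn [csum rsum]. ring. rewrite IHn; ring. Qed.
Lemma csum_conj f n : Cconj (csum f n) = csum (fun i => Cconj (f i)) n.
Proof. induction n; cbn [csum rsum]. unfold Cconj; apply injective_projections; simpl; ring.
rewrite Cplus_conj, IHn; auto. Qed.
Lemma csum_const c n : csum (fun _ => c) n = (INR n * c)%C.
Proof. induction n; cbn [csum rsum]. simpl INR. unfold Cmult; apply injective_projections; simpl; ring. rewrite IHn, S_INR, RtoC_plus. ring. Qed.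
Lemma rsum_const c n : rsum (fun _ => c) n = INR n * c.
Proof. induction n; cbn [csum rsum]. simpl INR; ring. rewrite IHn, S_INR. ring. Qed.
Lemma csum_RtoC f n : csum (fun i => RtoC (f i)) n = RtoC (rsum f n).
Proof. induction n; cbn [csum rsum]. auto. rewrite IHn, RtoC_plus; auto. Qed.
Lemma csum_swap (f : nat -> nat -> C) n m :
  csum (fun j => csum (fun i => f i j) m) n = csum (fun i => csum (fun j => f i j) n) m.
Proof. induction n; cbn [csum rsum]. induction m; cbn [csum rsum]; auto. rewrite <- IHm; ring.
rewrite IHn, <- csum_plus. auto. Qed.
Lemma csum_shift f n m : csum f (n + m) = (csum f n + csum (fun i => f (n + i)%nat) m)%C.
Proof. induction m; cbn [csum rsum]. rewrite Nat.add_0_r; ring. rewrite Nat.add_succ_r; cbn [csum rsum]. rewrite IHm; ring. Qed.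
Lemma csum_zero (f : nat -> C) n : (forall i, (i < n)%nat -> f i = (RtoC 0)) -> csum f n = (RtoC 0).
Proof. induction n; intros H; cbn [csum rsum]; auto. rewrite IHn, H; auto. ring. Qed.
Lemma csum_single (f : nat -> C) n k : (k < n)%nat -> (forall i, (i < n)%nat -> i <> k -> f i = (RtoC 0)) -> csum f n = f k.
Proof. induction n; intros Hk H. lia. cbn [csum rsum]. destruct (Nat.eq_dec k n).
 subst. rewrite csum_zero. ring. intros; apply H; lia.
 rewrite IHn, (H n); try lia. ring. intros; apply H; lia. Qed.
Lemma Cmod_csum f n : Cmod (csum f n) <= rsum (fun i => Cmod (f i)) n.
Proof. induction n; cbn [csum rsum]. rewrite Cmod_0; lra. eapply Rle_trans. apply Cmod_triangle. lra. Qed.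
Lemma sum_n_csum (a : nat -> C) N : sum_n a N = csum a (S N).
Proof. induction N. rewrite sum_O. change (a 0%nat = (RtoC 0 + a 0%nat)%C). ring. rewrite sum_Sn, IHN. reflexivity. Qed.

Definition W (x : R) : C := (cos x, sin x).
Lemma W_add x y : W (x + y) = (W x * W y)%C.
Proof. unfold W, Cmult. rewrite cos_plus, sin_plus. simpl. apply injective_projections; simpl; ring. Qed.
Lemma W_0 : W 0 = 1%C.
Proof. unfold W. rewrite cos_0, sin_0. reflexivity. Qed.
Lemma W_pow x n : Cpow (W x) n = W (INR n * x).
Proof. induction n. cbn [csum rsum]. rewrite Rmult_0_l, W_0. auto.
 rewrite Cpow_S, IHn, <- W_add, S_INR. f_equal. ring. Qed.
Lemma W_conj x : Cconj (W x) = W (- x).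
Proof. unfold W, Cconj; cbn [csum rsum]. rewrite cos_neg, sin_neg. auto. Qed.
Lemma W_mod x : Cmod (W x) = 1.
Proof. unfold Cmod, W; simpl fst; simpl snd. rewrite <- sqrt_1. f_equal. pose proof (sin2_cos2 x). unfold Rsqr in H. simpl. lra. Qed.
Lemma W_conj_mul x : (Cconj (W x) * W x)%C = 1%C.
Proof. rewrite W_conj, <- W_add. replace (-x + x) with 0 by ring. apply W_0. Qed.
Lemma W_2PIn k : W (2 * PI * INR k) = 1%C.
Proof. unfold W. pose proof (cos_period 0 k). pose proof (sin_period 0 k).
 replace (2 * PI * INR k) with (0 + 2 * INR k * PI) by ring. rewrite H, H0, cos_0, sin_0. auto. Qed.
Lemma W_ne1 x : 0 < x < 2 * PI -> W x <> 1%C.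
Proof. intros Hx E. unfold W in E. injection E. intros Hs Hc.
 destruct (Rtotal_order x PI) as [H|[H|H]].
 - pose proof (sin_gt_0 x). lra.
 - subst. rewrite cos_PI in Hc. lra.
 - pose proof (sin_lt_0 x). lra. Qed.

Lemma geom_csum w n : (csum (fun j => Cpow w j) n * (w - 1))%C = (Cpow w n - 1)%C.
Proof. induction n; cbn [csum rsum Cpow]. ring. rewrite Cmult_plus_distr_r, IHn. ring. Qed.

Definition E (K m j : nat) : C := W (2 * PI * INR m * INR j / INR K).

Lemma E_sum0 K m : (1 <= m < K)%nat -> csum (E K m) K = (RtoC 0).
Proof. intros Hm. set (th := 2 * PI * INR m / INR K).
 assert (HK : 0 < INR K) by (apply lt_0_INR; lia).
 assert (Hm0 : 0 < INR m) by (apply lt_0_INR; lia).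
 assert (HmK : INR m < INR K) by (apply lt_INR; lia).
 assert (Hth : 0 < th < 2 * PI). { unfold th. pose proof PI_RGT_0. split.
   apply Rdiv_lt_0_compat; nra. apply Rmult_lt_reg_r with (INR K); auto. field_simplify; nra. }
 assert (Hs : csum (E K m) K = csum (fun j => Cpow (W th) j) K).
 { apply csum_ext. intros. rewrite W_pow. unfold E, th. f_equal. field. lra. }
 rewrite Hs. pose proof (geom_csum (W th) K) as G.
 rewrite W_pow in G. replace (INR K * th) with (2 * PI * INR m) in G by (unfold th; field; lra).
 rewrite W_2PIn in G.
 pose proof (W_ne1 th Hth).
 assert (W th - 1 <> 0)%C. { intro Z. apply H. replace (W th) with ((W th - 1) + 1)%C by ring. rewrite Z. ring. }
 replace (csum (fun j => Cpow (W th) j) K) with (csum (fun j => Cpow (W th) j) K * (W th - 1) / (W th - 1))%C by (field; auto).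
 rewrite G. field. auto. Qed.

Lemma Cmod2C c : RtoC (Cmod c ^ 2) = (c * Cconj c)%C.
Proof. apply Cmod2_conj. Qed.

Lemma Cconj_R x : Cconj (RtoC x) = RtoC x.
Proof. unfold Cconj, RtoC; apply injective_projections; simpl; ring. Qed.

Lemma bessel_eq (u v X : nat -> C) (K : nat) (al be : C) :
  (forall j, Cmod (u j) = 1) -> (forall j, Cmod (v j) = 1) ->
  csum (fun j => Cconj (u j) * v j)%C K = 0%C ->
  csum (fun j => Cconj (u j) * X j)%C K = (INR K * al)%C ->
  csum (fun j => Cconj (v j) * X j)%C K = (INR K * be)%C ->
  rsum (fun j => Cmod (X j) ^ 2) K =
  INR K * (Cmod al ^ 2 + Cmod be ^ 2) + rsum (fun j => Cmod (X j - al * u j - be * v j)%C ^ 2) K.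
Proof.
intros Hu Hv Ho Ha Hb.
assert (Huu : forall j, (u j * Cconj (u j))%C = 1%C) by (intro j; rewrite <- Cmod2C, Hu; simpl; f_equal; ring).
assert (Hvv : forall j, (v j * Cconj (v j))%C = 1%C) by (intro j; rewrite <- Cmod2C, Hv; simpl; f_equal; ring).
set (Y := fun j => (X j - al * u j - be * v j)%C).
assert (Hpt : forall j, (Y j * Cconj (Y j))%C =
  (X j * Cconj (X j) + (- Cconj al) * (Cconj (u j) * X j) + (- Cconj be) * (Cconj (v j) * X j)
   + (- al) * Cconj (Cconj (u j) * X j) + (al * Cconj al) * (u j * Cconj (u j))
   + (al * Cconj be) * Cconj (Cconj (u j) * v j) + (- be) * Cconj (Cconj (v j) * X j)
   + (be * Cconj al) * (Cconj (u j) * v j) + (be * Cconj be) * (v j * Cconj (v j)))%C).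
{ intro j. unfold Y. rewrite !Cminus_conj, !Cmult_conj, !Cconj_conj. ring. }
assert (HS : csum (fun j => Y j * Cconj (Y j))%C K =
   (csum (fun j => X j * Cconj (X j))%C K - INR K * (al * Cconj al) - INR K * (be * Cconj be))%C).
{ rewrite (csum_ext _ _ K (fun j _ => Hpt j)).
  rewrite !csum_plus, !csum_scal, <- !csum_conj, Ho, Ha, Hb.
  rewrite (csum_ext _ (fun _ => 1%C) K (fun j _ => Huu j)), (csum_ext (fun j => v j * Cconj (v j))%C (fun _ => 1%C) K (fun j _ => Hvv j)), csum_const.
  rewrite !Cmult_conj, !Cconj_R. ring. }
assert (H1 : forall f : nat -> C, RtoC (rsum (fun j => Cmod (f j) ^ 2) K) = csum (fun j => f j * Cconj (f j))%C K).
{ intro f. rewrite <- csum_RtoC. apply csum_ext. intros; apply Cmod2C. }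
rewrite <- !H1, <- !Cmod2C in HS.
rewrite <- !RtoC_mult, <- !RtoC_minus in HS. apply (f_equal fst) in HS. unfold RtoC, fst in HS. unfold Y in HS. lra.
Qed.

Lemma E_mul K a b j : (E K a j * E K b j)%C = E K (a + b) j.
Proof. unfold E. rewrite <- W_add, plus_INR. f_equal. unfold Rdiv; ring. Qed.
Lemma E_conj_mul K l i j : (l <= i)%nat -> (Cconj (E K l j) * E K i j)%C = E K (i - l) j.
Proof. intros H. unfold E. rewrite W_conj, <- W_add, minus_INR by auto. f_equal. unfold Rdiv; ring. Qed.
Lemma E_0 K j : E K 0 j = 1%C.
Proof. unfold E. simpl INR. replace (2 * PI * 0 * INR j / INR K) with 0 by (unfold Rdiv; ring). apply W_0. Qed.
Lemma E_mod K m j : Cmod (E K m j) = 1.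
Proof. apply W_mod. Qed.

Lemma orth K i l : (i < K)%nat -> (l < K)%nat ->
  csum (fun j => Cconj (E K l j) * E K i j)%C K = if Nat.eqb i l then RtoC (INR K) else 0%C.
Proof. intros Hi Hl. destruct (Nat.eqb_spec i l).
- subst. rewrite (csum_ext _ (fun _ => 1%C)). rewrite csum_const. ring.
  intros. unfold E. apply W_conj_mul.
- destruct (Nat.lt_ge_cases l i).
  + rewrite (csum_ext _ (E K (i - l))). apply E_sum0. lia.
    intros. apply E_conj_mul. lia.
  + rewrite (csum_ext _ (fun j => Cconj (E K (l - i) j))).
    rewrite <- csum_conj, E_sum0 by lia. unfold Cconj; apply injective_projections; simpl; ring.
    intros. rewrite <- E_conj_mul by lia. rewrite Cmult_conj, Cconj_conj. ring.
Qed.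

Lemma DFT_coef K N l (d : nat -> C) : (l < N)%nat -> (N <= K)%nat ->
  csum (fun j => Cconj (E K l j) * csum (fun i => d i * E K i j) N)%C K = (INR K * d l)%C.
Proof. intros HlN HNK.
rewrite (csum_ext _ (fun j => csum (fun i => d i * (Cconj (E K l j) * E K i j)) N)%C).
2:{ intros j _. rewrite <- (csum_scal _ (fun i => d i * E K i j)%C). apply csum_ext. intros. ring. }
rewrite csum_swap.
set (g := fun i => (d i * (if Nat.eqb i l then RtoC (INR K) else RtoC 0))%C).
rewrite (csum_ext _ g).
2:{ intros i Hi. unfold g. rewrite (csum_scal (d i) (fun j => Cconj (E K l j) * E K i j)%C), orth by lia. auto. }
rewrite (csum_single g N l HlN). unfold g. rewrite Nat.eqb_refl. ring.
intros. unfold g. apply Nat.eqb_neq in H0. rewrite H0. ring.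
Qed.

Lemma zpow K r j i : Cpow (RtoC r * E K 1 j)%C i = (RtoC (r ^ i) * E K i j)%C.
Proof. rewrite Cpow_mult_l, <- RtoC_pow. f_equal. unfold E. rewrite W_pow. f_equal. simpl INR. unfold Rdiv; ring. Qed.

Lemma core (c : nat -> C) (r : R) (s : C) (n M : nat) (eps : R) :
  (1 <= n <= M)%nat -> 0 < r -> 0 <= eps ->
  (forall j, Cmod (csum (fun i => c i * Cpow (RtoC r * E (n + S M) 1 j) i)%C (S M)) <= 1 + eps) ->
  Cmod (c 0%nat) ^ 2 + Cmod (c n + s * c 0%nat)%C ^ 2 * r ^ (2 * n)
   <= (1 + eps) ^ 2 * (1 + Cmod s ^ 2 * r ^ (2 * n)).
Proof.
intros Hn Hr He HP.
set (K := (n + S M)%nat).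
assert (HK : 0 < INR K) by (apply lt_0_INR; unfold K; lia).
set (z := fun j => (RtoC r * E K 1 j)%C).
set (P := fun j => csum (fun i => c i * Cpow (z j) i)%C (S M)).
set (dP := fun i => (c i * RtoC (r ^ i))%C).
set (dQ := fun i => if Nat.ltb i n then RtoC 0 else (c (i - n)%nat * RtoC (r ^ i))%C).
assert (HPe : forall j, P j = csum (fun i => dP i * E K i j)%C (S M)).
{ intro j. unfold P. apply csum_ext. intros. unfold z, dP. rewrite zpow. ring. }
assert (HQe : forall j, (Cpow (z j) n * P j)%C = csum (fun i => dQ i * E K i j)%C K).
{ intro j. rewrite HPe. change K with (n + S M)%nat at 3. rewrite (csum_shift (fun i => dQ i * E K i j)%C n (S M)). rewrite (csum_zero (fun i => dQ i * E K i j)%C n).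
  2:{ intros. unfold dQ. replace (Nat.ltb i n) with true by (symmetry; apply Nat.ltb_lt; lia). ring. }
  rewrite <- (csum_scal (Cpow (z j) n) (fun i => dP i * E K i j)%C).
  rewrite Cplus_0_l. apply csum_ext. intros i _. unfold dQ, dP, z.
  replace (Nat.ltb (n + i) n) with false by (symmetry; apply Nat.ltb_ge; lia).
  replace (n + i - n)%nat with i by lia. rewrite zpow, pow_add, RtoC_mult.
  rewrite <- (E_mul K n i j). ring. }
set (H := fun j => (P j * (1 + s * Cpow (z j) n))%C).
assert (HA : forall l, (l <= M)%nat ->
   csum (fun j => Cconj (E K l j) * H j)%C K = (INR K * (dP l + s * dQ l))%C).
{ intros l Hl.
  rewrite (csum_ext _ (fun j => Cconj (E K l j) * csum (fun i => dP i * E K i j) (S M)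
            + s * (Cconj (E K l j) * csum (fun i => dQ i * E K i j) K))%C).
  2:{ intros j _. unfold H. rewrite <- HQe, <- HPe. ring. }
  rewrite csum_plus, csum_scal, !DFT_coef; unfold K; try lia. ring. }
set (al := c 0%nat). set (be := ((c n + s * c 0%nat) * RtoC (r ^ n))%C).
assert (Hbes := bessel_eq (fun j => E K 0 j) (fun j => E K n j) H K al be
   (fun j => E_mod K 0 j) (fun j => E_mod K n j)).
rewrite orth in Hbes by (unfold K; lia).
replace (Nat.eqb n 0) with false in Hbes by (symmetry; apply Nat.eqb_neq; lia).
specialize (Hbes eq_refl).
rewrite HA in Hbes by lia. rewrite HA in Hbes by lia.
assert (Hd0 : (dP 0%nat + s * dQ 0%nat)%C = al).
{ unfold dP, dQ, al. replace (Nat.ltb 0 n) with true by (symmetry; apply Nat.ltb_lt; lia). simpl pow. rewrite Cmult_1_r. ring. }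
assert (Hdn : (dP n + s * dQ n)%C = be).
{ unfold dP, dQ, be. rewrite Nat.ltb_irrefl, Nat.sub_diag. ring. }
rewrite Hd0, Hdn in Hbes. specialize (Hbes eq_refl eq_refl).
set (t := (s * RtoC (r ^ n))%C).
set (X := fun j => (E K 0 j + t * E K n j)%C).
assert (Hbes2 := bessel_eq (fun j => E K 0 j) (fun j => E K n j) X K 1%C t
   (fun j => E_mod K 0 j) (fun j => E_mod K n j)).
rewrite orth in Hbes2 by (unfold K; lia).
replace (Nat.eqb n 0) with false in Hbes2 by (symmetry; apply Nat.eqb_neq; lia).
specialize (Hbes2 eq_refl).
assert (HX : forall l, (l < K)%nat -> csum (fun j => Cconj (E K l j) * X j)%C K =
     (INR K * ((if Nat.eqb 0 l then RtoC 1 else RtoC 0) + t * (if Nat.eqb n l then RtoC 1 else RtoC 0)))%C).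
{ intros l Hl. unfold X. rewrite (csum_ext _ (fun j => Cconj (E K l j) * E K 0 j + t * (Cconj (E K l j) * E K n j))%C).
  2:{ intros; ring. }
  rewrite csum_plus, csum_scal, !orth by (unfold K; lia).
  destruct (Nat.eqb 0 l); destruct (Nat.eqb n l); ring. }
rewrite !HX in Hbes2 by (unfold K; lia).
rewrite Nat.eqb_refl in Hbes2. replace (Nat.eqb 0 n) with false in Hbes2 by (symmetry; apply Nat.eqb_neq; lia).
replace (Nat.eqb n 0) with false in Hbes2 by (symmetry; apply Nat.eqb_neq; lia).
rewrite Nat.eqb_refl in Hbes2.
assert (E1 : (INR K * (RtoC 1 + t * RtoC 0))%C = (INR K * 1)%C) by ring.
assert (E2 : (INR K * (RtoC 0 + t * RtoC 1))%C = (INR K * t)%C) by ring.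
rewrite E1, E2 in Hbes2. specialize (Hbes2 eq_refl eq_refl).
rewrite (rsum_ext (fun j => Cmod (X j - 1 * E K 0 j - t * E K n j)%C ^ 2) (fun _ => 0)) in Hbes2.
2:{ intros. unfold X. replace (E K 0 i + t * E K n i - 1 * E K 0 i - t * E K n i)%C with (RtoC 0) by ring.
    rewrite Cmod_0. ring. }
rewrite rsum_const, Cmod_1 in Hbes2.
assert (HXe : forall j, X j = (1 + s * Cpow (z j) n)%C).
{ intro j. unfold X, t, z. rewrite zpow, E_0. ring. }

assert (Hpt : forall j, Cmod (H j) ^ 2 <= (1 + eps) ^ 2 * Cmod (X j) ^ 2).
{ intro j. unfold H. rewrite HXe, Cmod_mult. specialize (HP j). change (Cmod (P j) <= 1 + eps) in HP.
  pose proof (Cmod_ge_0 (P j)). pose proof (Cmod_ge_0 (1 + s * Cpow (z j) n)%C).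
  rewrite Rpow_mult_distr. apply Rmult_le_compat_r. nra. apply pow_incr. lra. }
assert (Hsum : rsum (fun j => Cmod (H j) ^ 2) K <= (1 + eps) ^ 2 * rsum (fun j => Cmod (X j) ^ 2) K).
{ rewrite <- rsum_scal. apply rsum_le. intros; auto. }
assert (Hnn : 0 <= rsum (fun j => Cmod (H j - al * E K 0 j - be * E K n j)%C ^ 2) K).
{ apply rsum_nonneg. intros. apply pow2_ge_0. }
assert (Hbe : Cmod be ^ 2 = Cmod (c n + s * c 0%nat)%C ^ 2 * r ^ (2 * n)).
{ unfold be. rewrite Cmod_mult, Cmod_R, Rabs_pos_eq by (apply pow_le; lra). rewrite (Nat.mul_comm 2 n), pow_mult. ring. }
assert (Ht : Cmod t ^ 2 = Cmod s ^ 2 * r ^ (2 * n)).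
{ unfold t. rewrite Cmod_mult, Cmod_R, Rabs_pos_eq by (apply pow_le; lra). rewrite (Nat.mul_comm 2 n), pow_mult. ring. }
rewrite Hbe in Hbes. rewrite Ht in Hbes2. fold al.
assert (Hfin : INR K * (Cmod al ^ 2 + Cmod (c n + s * c 0%nat)%C ^ 2 * r ^ (2 * n)) <=
               INR K * ((1 + eps) ^ 2 * (1 + Cmod s ^ 2 * r ^ (2 * n)))).
{ rewrite Hbes in Hsum. rewrite Hbes2 in Hsum. nra. }
apply Rmult_le_reg_l in Hfin; auto.
Qed.

Lemma series_eventually (a : nat -> C) (l : C) (eps : R) : is_series a l -> 0 < eps ->
  exists N, forall k, (N <= k)%nat -> Cmod (csum a (S k) - l) < eps.
Proof. intros H He. unfold is_series in H. apply filterlim_locally_ball_norm with (eps := mkposreal eps He) in H.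
 destruct H as [N HN]. exists N. intros k Hk. specialize (HN k Hk). rewrite <- sum_n_csum. exact HN. Qed.

Lemma terms_small (a : nat -> C) (l : C) : is_series a l -> exists N, forall k, (N <= k)%nat -> Cmod (a k) < 1.
Proof. intros H. destruct (series_eventually a l (1/4) H) as [N HN]. lra.
 exists (S N). intros k Hk. destruct k. lia.
 assert (E : a (S k) = ((csum a (S (S k)) - l) - (csum a (S k) - l))%C) by (cbn [csum]; ring).
 rewrite E. unfold Cminus at 1. eapply Rle_lt_trans. apply Cmod_triangle. rewrite Cmod_opp.
 pose proof (HN (S k) ltac:(lia)). pose proof (HN k ltac:(lia)). lra. Qed.

Lemma rsum_single_le (f : nat -> R) n i : (forall j, (j < n)%nat -> 0 <= f j) -> (i < n)%nat -> f i <= rsum f n.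
Proof. induction n; intros H Hi. lia. cbn [rsum]. destruct (Nat.eq_dec i n).
 subst. pose proof (rsum_nonneg f n ltac:(intros; apply H; lia)). lra.
 assert (f i <= rsum f n) by (apply IHn; intros; try apply H; lia). pose proof (H n ltac:(lia)). lra. Qed.

Lemma rsum_geom q k : rsum (fun i => q ^ i) k * (1 - q) = 1 - q ^ k.
Proof. induction k; cbn [rsum]. simpl; ring. rewrite Rmult_plus_distr_r, IHk. simpl. ring. Qed.

Lemma UA (R0 : R) (c : nat -> C) (F : C -> C) :
  (forall z, Cmod z < R0 -> is_series (fun n => c n * Cpow z n)%C (F z)) ->
  forall r, 0 < r < R0 -> forall eps, 0 < eps -> exists M0, forall M, (M0 <= M)%nat ->
  forall z, Cmod z <= r -> Cmod (F z - csum (fun i => c i * Cpow z i)%C (S M)) <= eps.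
Proof.
intros Hser r Hr eps He.
set (r' := (r + R0) / 2).
assert (Hr' : 0 < r' < R0) by (unfold r'; lra).
assert (Hs := Hser (RtoC r') ltac:(rewrite Cmod_R, Rabs_pos_eq; lra)).
destruct (terms_small _ _ Hs) as [N0 HN0].
set (B := 1 + rsum (fun i => Cmod (c i) * r' ^ i) N0).
assert (Hnn : forall i, 0 <= Cmod (c i) * r' ^ i) by (intro; apply Rmult_le_pos; [apply Cmod_ge_0| apply pow_le; lra]).
assert (HB : forall i, Cmod (c i) * r' ^ i <= B).
{ intro i. destruct (Nat.lt_ge_cases i N0).
  - pose proof (rsum_single_le (fun i => Cmod (c i) * r' ^ i) N0 i (fun j _ => Hnn j) H). unfold B. lra.
  - specialize (HN0 i H). rewrite Cmod_mult, Cmod_pow, Cmod_R, Rabs_pos_eq in HN0 by lra.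
    pose proof (rsum_nonneg (fun i => Cmod (c i) * r' ^ i) N0 (fun j _ => Hnn j)). unfold B. lra. }
assert (HB0 : 0 < B).
{ unfold B. pose proof (rsum_nonneg (fun i => Cmod (c i) * r' ^ i) N0 (fun j _ => Hnn j)). lra. }
set (q := r / r').
assert (Hrr : r < r') by (unfold r'; lra).
assert (Hq : 0 < q < 1).
{ unfold q; split. apply Rdiv_lt_0_compat; lra. apply Rmult_lt_reg_r with r'; [lra|]. unfold Rdiv. rewrite Rmult_assoc, Rinv_l by lra. lra. }
assert (Hterm : forall z i, Cmod z <= r -> Cmod (c i * Cpow z i)%C <= B * q ^ i).
{ intros z i Hz. rewrite Cmod_mult, Cmod_pow.
  assert (Cmod z ^ i <= r ^ i) by (apply pow_incr; split; [apply Cmod_ge_0|lra]).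
  replace r with (q * r') in H by (unfold q; field; lra). rewrite Rpow_mult_distr in H.
  pose proof (HB i). pose proof (Cmod_ge_0 (c i)). pose proof (pow_le q i ltac:(lra)).
  apply Rle_trans with (Cmod (c i) * (q ^ i * r' ^ i)). apply Rmult_le_compat_l; auto. nra. }
assert (Htail : forall z M k, Cmod z <= r ->
   Cmod (csum (fun i => c i * Cpow z i)%C (S M + k) - csum (fun i => c i * Cpow z i)%C (S M)) <= B * q ^ (S M) / (1 - q)).
{ intros z M k Hz. rewrite csum_shift. replace (csum (fun i => c i * Cpow z i)%C (S M) + csum (fun i => c (S M + i)%nat * Cpow z (S M + i)) k - csum (fun i => c i * Cpow z i)%C (S M))%C
   with (csum (fun i => c (S M + i)%nat * Cpow z (S M + i)) k)%C by ring.
  eapply Rle_trans. apply Cmod_csum.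
  eapply Rle_trans. apply rsum_le with (g := fun i => B * q ^ (S M) * q ^ i). intros. rewrite Rmult_assoc, <- pow_add. apply Hterm; auto.
  rewrite rsum_scal. assert (G := rsum_geom q k).
  assert (Hg : rsum (fun i => q ^ i) k <= 1 / (1 - q)).
  { apply Rmult_le_reg_r with (1 - q); [lra|]. unfold Rdiv. rewrite Rmult_assoc, Rinv_l by lra.
    pose proof (pow_le q k ltac:(lra)). lra. }
  change (rsum (pow q) k) with (rsum (fun i => q ^ i) k).
  pose proof (pow_le q (S M) ltac:(lra)).
  apply Rle_trans with (B * q ^ S M * (1 / (1 - q))). apply Rmult_le_compat_l; auto. nra.
  right. field. lra. }
destruct (pow_lt_1_zero q ltac:(rewrite Rabs_pos_eq; lra) (eps * (1 - q) / B) ltac:(apply Rdiv_lt_0_compat; nra)) as [M0 HM0].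
exists M0. intros M HM z Hz.
assert (HqM : B * q ^ S M / (1 - q) < eps).
{ specialize (HM0 (S M) ltac:(lia)). rewrite Rabs_pos_eq in HM0 by (apply pow_le; lra).
  apply Rmult_lt_reg_r with ((1 - q) / B). apply Rdiv_lt_0_compat; lra.
  replace (B * q ^ S M / (1 - q) * ((1 - q) / B)) with (q ^ S M) by (field; split; lra). lra. }
destruct (Rle_or_lt (Cmod (F z - csum (fun i => c i * Cpow z i)%C (S M))) eps) as [Hle|Hlt]; auto.
exfalso.
set (d := Cmod (F z - csum (fun i => c i * Cpow z i)%C (S M)) - B * q ^ S M / (1 - q)).
assert (Hd : 0 < d) by (unfold d; lra).
destruct (series_eventually _ _ d (Hser z ltac:(lra)) Hd) as [N1 HN1].
specialize (HN1 (N1 + S M)%nat ltac:(lia)).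
replace (S (N1 + S M)) with (S M + S N1)%nat in HN1 by lia.
specialize (Htail z M (S N1) Hz).
set (A1 := csum (fun i => c i * Cpow z i)%C (S M + S N1)) in *.
set (A0 := csum (fun i => c i * Cpow z i)%C (S M)) in *.
assert (Cmod (F z - A0) <= Cmod (A1 - F z) + Cmod (A1 - A0)).
{ replace (F z - A0)%C with (- (A1 - F z) + (A1 - A0))%C by ring.
  eapply Rle_trans. apply Cmod_triangle. rewrite Cmod_opp. lra. }
unfold d in HN1. fold A0 in HN1. lra.
Qed.

Lemma eps_lim X Y : 0 <= Y -> (forall eps, 0 < eps <= 1 -> X <= (1 + eps) ^ 2 * Y) -> X <= Y.
Proof. intros HY H. destruct (Rle_or_lt X Y) as [h|h]; auto. exfalso.
 set (e := Rmin 1 ((X - Y) / (3 * Y + 1))).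
 assert (He : 0 < e <= 1). { unfold e. split. apply Rmin_glb_lt. lra. apply Rdiv_lt_0_compat; lra. apply Rmin_l. }
 assert (He2 : e * (3 * Y + 1) <= X - Y).
 { apply Rle_trans with ((X - Y) / (3 * Y + 1) * (3 * Y + 1)). apply Rmult_le_compat_r. lra. apply Rmin_r. right; field; lra. }
 specialize (H e He). nra. Qed.

Lemma pow_diff_le (R0 r : R) n : 0 <= r <= R0 -> R0 ^ S n - r ^ S n <= INR (S n) * R0 ^ n * (R0 - r).
Proof. intros Hr. induction n. simpl. lra.
 replace (R0 ^ S (S n) - r ^ S (S n)) with (R0 * (R0 ^ S n - r ^ S n) + r ^ S n * (R0 - r)) by (simpl; ring).
 rewrite S_INR. assert (r ^ S n <= R0 ^ S n) by (apply pow_incr; lra).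
 assert (0 <= R0 - r) by lra.
 apply Rle_trans with (R0 * (INR (S n) * R0 ^ n * (R0 - r)) + R0 ^ S n * (R0 - r)).
 apply Rplus_le_compat. apply Rmult_le_compat_l; lra. apply Rmult_le_compat_r; lra.
 right. simpl. ring. Qed.

Lemma lim_pow X Y R0 n : 0 <= X -> 0 < R0 -> (forall r, 0 < r < R0 -> X * r ^ n <= Y) -> X * R0 ^ n <= Y.
Proof. intros HX HR H. destruct n. simpl. specialize (H (R0/2) ltac:(lra)). simpl in H. lra.
 destruct (Rle_or_lt (X * R0 ^ S n) Y) as [h|h]; auto. exfalso.
 set (D := X * INR (S n) * R0 ^ n + 1).
 assert (HD : 0 < D). { unfold D. pose proof (pos_INR (S n)). pose proof (pow_le R0 n ltac:(lra)).
   pose proof (Rmult_le_pos _ _ (Rmult_le_pos _ _ HX H0) H1). lra. }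
 set (d := Rmin (R0 / 2) ((X * R0 ^ S n - Y) / (2 * D))).
 assert (Hd : 0 < d). { unfold d. apply Rmin_glb_lt. lra. apply Rdiv_lt_0_compat; lra. }
 assert (Hd1 : d <= R0 / 2) by apply Rmin_l.
 assert (Hd2 : d * (2 * D) <= X * R0 ^ S n - Y).
 { apply Rle_trans with ((X * R0 ^ S n - Y) / (2 * D) * (2 * D)). apply Rmult_le_compat_r. lra. apply Rmin_r. right; field; lra. }
 specialize (H (R0 - d) ltac:(lra)).
 pose proof (pow_diff_le R0 (R0 - d) n ltac:(lra)).
 replace (R0 - (R0 - d)) with d in H0 by ring.
 assert (X * (R0 ^ S n - (R0 - d) ^ S n) <= X * (INR (S n) * R0 ^ n * d)) by (apply Rmult_le_compat_l; auto).
 assert (X * (INR (S n) * R0 ^ n * d) = (D - 1) * d) by (unfold D; ring).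
 nra. Qed.

Lemma wiener_r (R0 : R) (c : nat -> C) (F : C -> C) :
  (forall z, Cmod z < R0 -> is_series (fun n => c n * Cpow z n)%C (F z)) ->
  (forall z, Cmod z < R0 -> Cmod (F z) <= 1) ->
  forall r, 0 < r < R0 -> forall n, (1 <= n)%nat -> forall s,
  Cmod (c 0%nat) ^ 2 + Cmod (c n + s * c 0%nat)%C ^ 2 * r ^ (2 * n) <= 1 + Cmod s ^ 2 * r ^ (2 * n).
Proof.
intros Hser Hb r Hr n Hn s. apply eps_lim.
{ pose proof (pow2_ge_0 (Cmod s)). pose proof (pow_le r (2 * n) ltac:(lra)). nra. }
intros eps He.
destruct (UA R0 c F Hser r Hr eps ltac:(lra)) as [M0 HM0].
set (M := max M0 n).
apply (core c r s n M eps); try lia; try lra.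
intro j. set (z := (RtoC r * E (n + S M) 1 j)%C).
assert (Hz : Cmod z = r) by (unfold z; rewrite Cmod_mult, Cmod_R, E_mod, Rabs_pos_eq; lra).
specialize (HM0 M ltac:(lia) z ltac:(lra)). specialize (Hb z ltac:(lra)).
set (S0 := csum (fun i => c i * Cpow z i)%C (S M)) in *.
replace S0 with (F z - (F z - S0))%C by ring. unfold Cminus at 1.
eapply Rle_trans. apply Cmod_triangle. rewrite Cmod_opp. lra.
Qed.

Lemma wiener (R0 : R) (c : nat -> C) (F : C -> C) :
  0 < R0 ->
  (forall z, Cmod z < R0 -> is_series (fun n => c n * Cpow z n)%C (F z)) ->
  (forall z, Cmod z < R0 -> Cmod (F z) <= 1) ->
  forall n, (1 <= n)%nat -> Cmod (c n) * R0 ^ n <= 1 - Cmod (c 0%nat) ^ 2.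
Proof.
intros HR Hser Hb n Hn. apply lim_pow; auto. apply Cmod_ge_0.
intros r Hr.
set (a := Cmod (c 0%nat)). set (x := Cmod (c n) * r ^ n).
assert (Hx0 : 0 <= x) by (unfold x; apply Rmult_le_pos; [apply Cmod_ge_0| apply pow_le; lra]).
assert (Ha0 : 0 <= a) by apply Cmod_ge_0.
assert (Hrn : r ^ (2 * n) = (r ^ n) ^ 2) by (rewrite (Nat.mul_comm 2 n), pow_mult; auto).
pose proof (wiener_r R0 c F Hser Hb r Hr n Hn 0%C) as H0.
replace (c n + 0 * c 0%nat)%C with (c n) in H0 by ring. rewrite Cmod_0 in H0.
fold a in H0. rewrite Hrn in H0.
assert (H1 : a ^ 2 + x ^ 2 <= 1) by (unfold x; rewrite Rpow_mult_distr; lra).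
destruct (Req_dec (a ^ 2) 1) as [Ha1|Ha1].
{ rewrite Ha1. assert (x ^ 2 <= 0) by lra. assert (x = 0) by nra. unfold x in H. lra. }
assert (Ha2 : a ^ 2 < 1) by (pose proof (pow2_ge_0 x); lra).
set (lam := 1 / (1 - a ^ 2)).
assert (Hlam : lam * (1 - a ^ 2) = 1) by (unfold lam; field; lra).
assert (Hlp : 0 < lam) by (unfold lam; apply Rdiv_lt_0_compat; lra).
pose proof (wiener_r R0 c F Hser Hb r Hr n Hn (RtoC lam * c n * Cconj (c 0%nat))%C) as H2.
assert (Hc : (c n + RtoC lam * c n * Cconj (c 0%nat) * c 0%nat)%C = (c n * RtoC (1 + lam * a ^ 2))%C).
{ replace (RtoC lam * c n * Cconj (c 0%nat) * c 0%nat)%C with (RtoC lam * c n * (c 0%nat * Cconj (c 0%nat)))%C by ring.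
  rewrite <- Cmod2_conj. fold a. rewrite RtoC_plus, RtoC_mult. ring. }
rewrite Hc in H2. rewrite !Cmod_mult, Cmod_conj, !Cmod_R, (Rabs_pos_eq lam), (Rabs_pos_eq (1 + lam * a ^ 2)) in H2 by nra.
fold a in H2. rewrite Hrn in H2.
assert (Hl2 : 1 + lam * a ^ 2 = lam) by nra.
rewrite Hl2 in H2.
assert (H3 : x ^ 2 * lam ^ 2 * (1 - a ^ 2) <= 1 - a ^ 2).
{ unfold x. rewrite Rpow_mult_distr. nra. }
assert (H4 : (x * lam) ^ 2 <= 1).
{ rewrite Rpow_mult_distr. apply Rmult_le_reg_r with (1 - a ^ 2). lra. lra. }
assert (H5 : x * lam <= 1) by nra.
fold x. apply Rmult_le_reg_r with lam. lra. nra.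
Qed.

Lemma final_ineq A rho S1 S2 : 0 <= A <= 1 -> 0 <= rho <= 1/3 ->
  S1 <= A + (1 - A ^ 2) * (rho / (1 - rho)) -> 0 <= S2 <= (1 - A ^ 2) ^ 2 * (rho ^ 2 / (1 - rho ^ 2)) ->
  S1 + (1 / (1 + A) + rho / (1 - rho)) * S2 <= 1.
Proof. intros HA Hr H1 H2.
 set (x := rho / (1 - rho)). set (y := rho ^ 2 / (1 - rho ^ 2)). set (z := 1 / (1 + A)).
 assert (Hx : 0 <= x <= 1/2). { unfold x. split. apply Rdiv_le_0_compat; lra.
   apply Rmult_le_reg_r with (1 - rho). lra. unfold Rdiv. rewrite Rmult_assoc, Rinv_l by lra. lra. }
 assert (Hy : 0 <= y <= 1/8). { unfold y. assert (rho^2 <= 1/9) by nra. assert (0 <= rho ^ 2) by nra. split. apply Rdiv_le_0_compat; lra.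
   apply Rmult_le_reg_r with (1 - rho^2). lra. unfold Rdiv. rewrite Rmult_assoc, Rinv_l by lra. lra. }
 assert (Hz : z * (1 + A) = 1) by (unfold z; field; lra).
 assert (Hz0 : 0 < z) by (unfold z; apply Rdiv_lt_0_compat; lra).
 fold x y z in H1, H2 |- *.
 assert (HA2 : 0 <= 1 - A ^ 2) by nra.
 assert (Hb : (1 - A ^ 2) ^ 2 * y <= (1 - A ^ 2) ^ 2 / 8) by (pose proof (pow2_ge_0 (1 - A^2)); nra).
 assert (HS2 : S2 <= (1 - A ^ 2) ^ 2 / 8) by lra.
 assert (Hzx : 0 <= z + x) by lra.
 assert (E1 : (z + x) * S2 <= (z + 1/2) * ((1 - A ^ 2) ^ 2 / 8)) by (apply Rmult_le_compat; lra).
 assert (E2 : z * (1 - A ^ 2) ^ 2 = (1 - A) ^ 2 * (1 + A)).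
 { replace (z * (1 - A ^ 2) ^ 2) with ((z * (1 + A)) * ((1 - A) ^ 2 * (1 + A))) by ring. rewrite Hz. ring. }
 assert (E3 : (1 - A ^ 2) * x <= (1 - A ^ 2) / 2) by nra.
 assert (Fin : A + (1 - A ^ 2) / 2 + (z + 1/2) * ((1 - A ^ 2) ^ 2 / 8) <= 1).
 { replace ((z + 1/2) * ((1 - A ^ 2) ^ 2 / 8)) with ((z * (1 - A ^ 2) ^ 2 + (1 - A ^ 2) ^ 2 / 2) / 8) by field.
   rewrite E2. set (t := 1 - A). replace A with (1 - t) by (unfold t; ring).
   assert (0 <= t <= 1) by (unfold t; lra). nra. }
 lra. Qed.

Lemma cgeom (q : C) : Cmod q < 1 -> is_series (fun k => Cpow q k) (/ (1 - q))%C.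
Proof. intros Hq. unfold is_series. apply filterlim_locally_ball_norm. intros [eps He]. simpl.
 assert (Hq1 : (1 - q)%C <> 0%C).
 { intro Z. assert (q = 1%C) by (replace q with (1 - (1 - q))%C by ring; rewrite Z; ring). subst. rewrite Cmod_1 in Hq. lra. }
 assert (Hm : 0 < Cmod (1 - q)) by (apply Cmod_gt_0; auto).
 destruct (pow_lt_1_zero (Cmod q) ltac:(rewrite Rabs_pos_eq; [lra|apply Cmod_ge_0]) (eps * Cmod (1 - q)) ltac:(nra)) as [N HN].
 exists N. intros n Hn. unfold ball_norm. change (Cmod (sum_n (fun k => Cpow q k) n - / (1 - q)) < eps).
 rewrite sum_n_csum.
 assert (G := geom_csum q (S n)).
 assert (E : (csum (fun j => Cpow q j) (S n) - / (1 - q))%C = (- Cpow q (S n) / (1 - q))%C).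
 { replace (csum (fun j => Cpow q j) (S n)) with (csum (fun j => Cpow q j) (S n) * (q - 1) / (q - 1))%C.
   rewrite G. field. split; auto. intro Z; apply Hq1. replace (1 - q)%C with (- (q - 1))%C by ring. rewrite Z. ring.
   field. intro Z; apply Hq1. replace (1 - q)%C with (- (q - 1))%C by ring. rewrite Z. ring. }
 rewrite E, Cmod_div, Cmod_opp, Cmod_pow by auto.
 specialize (HN (S n) ltac:(lia)). rewrite Rabs_pos_eq in HN by (apply pow_le, Cmod_ge_0).
 apply Rmult_lt_reg_r with (Cmod (1 - q)); auto. unfold Rdiv. rewrite Rmult_assoc, Rinv_l by lra. lra. Qed.

Definition bb (al : R) (n : nat) : R := match n with O => al | S k => - (1 - al ^ 2) * al ^ k end.
Definition mob (al : R) (z : C) : C := ((RtoC al - z) / (1 - RtoC al * z))%C.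

Lemma mob_den al z : 0 <= al < 1 -> Cmod z < 1 -> (1 - RtoC al * z)%C <> 0%C.
Proof. intros Ha Hz Z. assert (RtoC al * z = 1)%C by (replace (RtoC al * z)%C with (1 - (1 - RtoC al * z))%C by ring; rewrite Z; ring).
 apply (f_equal Cmod) in H. rewrite Cmod_mult, Cmod_R, Cmod_1, Rabs_pos_eq in H by lra.
 pose proof (Cmod_ge_0 z). nra. Qed.

Lemma mob_series al z : 0 <= al < 1 -> Cmod z < 1 ->
  is_series (fun n => RtoC (bb al n) * Cpow z n)%C (mob al z).
Proof. intros Ha Hz. pose proof (mob_den al z Ha Hz) as Hd.
 apply is_series_decr_1.
 assert (Hq : Cmod (RtoC al * z) < 1) by (rewrite Cmod_mult, Cmod_R, Rabs_pos_eq by lra; pose proof (Cmod_ge_0 z); nra).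
 pose proof (is_series_scal (RtoC (- (1 - al ^ 2)) * z)%C _ _ (cgeom _ Hq)) as H.
 change (is_series (fun k => RtoC (bb al (S k)) * Cpow z (S k))%C (mob al z + - (RtoC al * 1))%C).
 replace (mob al z + - (RtoC al * 1))%C with ((RtoC (- (1 - al ^ 2)) * z) * / (1 - RtoC al * z))%C.
 2:{ unfold mob. rewrite RtoC_opp, RtoC_minus, RtoC_pow. field. auto. }
 eapply is_series_ext. 2: exact H.
 intro k. change ((RtoC (- (1 - al ^ 2)) * z * Cpow (RtoC al * z) k)%C = (RtoC (- (1 - al ^ 2) * al ^ k) * (z * Cpow z k))%C).
 rewrite Cpow_mult_l, RtoC_mult, RtoC_pow. ring. Qed.

Lemma mob_bound al z : 0 <= al < 1 -> Cmod z < 1 -> Cmod (mob al z) <= 1.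
Proof. intros Ha Hz. pose proof (mob_den al z Ha Hz) as Hd. unfold mob. rewrite Cmod_div by auto.
 assert (Hm : 0 < Cmod (1 - RtoC al * z)) by (apply Cmod_gt_0; auto).
 apply Rmult_le_reg_r with (Cmod (1 - RtoC al * z)); auto. unfold Rdiv. rewrite Rmult_assoc, Rinv_l by lra. rewrite ?Rmult_1_l, ?Rmult_1_r.
 destruct z as [x y]. unfold Cmod in *. apply sqrt_le_1_alt. simpl in *.
 assert (x * (x * 1) + y * (y * 1) < 1).
 { destruct (Rlt_or_le (x * (x * 1) + y * (y * 1)) 1); auto. exfalso. pose proof (sqrt_le_1_alt _ _ H). rewrite sqrt_1 in H0. lra. }
 assert (0 <= (1 - al*al) * (1 - x*x - y*y)) by (apply Rmult_le_pos; nra). nra. Qed.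

Lemma Series_nonneg' b : (forall n, 0 <= b n) -> ex_series b -> 0 <= Series b.
Proof. intros H Hb. pose proof (Series_le (fun n => 0 * b n) b ltac:(intros n; specialize (H n); split; lra) Hb).
 rewrite Series_scal_l in H0. lra. Qed.

Lemma geom_scal (c q : R) : Rabs q < 1 -> is_series (fun n => c * q ^ n) (c / (1 - q)).
Proof. intros Hq. pose proof (is_series_scal_l c _ _ (is_series_geom q Hq)). exact H. Qed.

Lemma part1 (g : R) (f : C -> C) (a : nat -> C) (rho : R) :
  0 <= g < 1 -> admissible g f a -> 0 <= rho <= 1 / 3 -> exists L, lhs_is g rho a L /\ L <= 1.
Proof.
intros Hg [Hser0 Hb0] Hrho.
set (R0 := rad g).
assert (HR0 : 0 < R0) by (unfold R0, rad; apply Rdiv_lt_0_compat; lra).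
set (F := fun z => f (z + cen g)%C).
assert (Hser : forall z, Cmod z < R0 -> is_series (fun n => a n * Cpow z n)%C (F z)).
{ intros z Hz. assert (HO : Omega g (z + cen g)%C) by (unfold Omega; replace (z + cen g - cen g)%C with z by ring; auto).
  specialize (Hser0 _ HO). eapply is_series_ext; [|exact Hser0]. intro n.
  replace (z + cen g - cen g)%C with z by ring. reflexivity. }
assert (Hb : forall z, Cmod z < R0 -> Cmod (F z) <= 1).
{ intros z Hz. apply Hb0. unfold Omega; replace (z + cen g - cen g)%C with z by ring; auto. }
pose proof (wiener R0 a F HR0 Hser Hb) as HW.
set (A := Cmod (a 0%nat)) in *.
assert (HA : 0 <= A <= 1).
{ pose proof (HW 1%nat ltac:(lia)). pose proof (Cmod_ge_0 (a 1%nat)). assert (0 <= A) by apply Cmod_ge_0.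
  assert (0 <= Cmod (a 1%nat) * R0 ^ 1) by (apply Rmult_le_pos; auto; apply pow_le; lra). split; nra. }
assert (Hconv : forall n, Cmod (a n) / (1 - g) ^ n = Cmod (a n) * R0 ^ n).
{ intro n. unfold R0, rad. unfold Rdiv. rewrite Rmult_1_l, pow_inv. auto. }
set (w := fun n => Cmod (a n) * R0 ^ n).
assert (Hw0 : forall n, 0 <= w n) by (intro; unfold w; apply Rmult_le_pos; [apply Cmod_ge_0|apply pow_le; lra]).
assert (HwS : forall n, w (S n) <= 1 - A ^ 2) by (intro; apply HW; lia).
assert (HwA : w 0%nat = A) by (unfold w, A; simpl; ring).
set (u := fun n => Cmod (a n) / (1 - g) ^ n * rho ^ n).
assert (Hu : forall n, u n = w n * rho ^ n) by (intro; unfold u, w; rewrite Hconv; auto).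
assert (Hrabs : Rabs rho < 1) by (rewrite Rabs_pos_eq; lra).
assert (Hrabs2 : Rabs (rho ^ 2) < 1) by (rewrite Rabs_pos_eq; nra).
assert (Hule : forall n, 0 <= u n <= rho ^ n).
{ intro n. rewrite Hu. pose proof (pow_le rho n ltac:(lra)). destruct n.
  - rewrite HwA. split; nra.
  - specialize (HwS n). specialize (Hw0 (S n)). split; nra. }
assert (Hexu : ex_series u).
{ apply (@ex_series_le R_AbsRing R_CompleteNormedModule u (fun n => rho ^ n)). intro n. change (Rabs (u n) <= rho ^ n).
  rewrite Rabs_pos_eq by apply Hule. apply Hule. exists (/ (1 - rho)). apply is_series_geom; auto. }
assert (HS1 : Series u <= A + (1 - A ^ 2) * (rho / (1 - rho))).
{ rewrite Series_incr_1 by auto.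
  assert (Hg1 := geom_scal ((1 - A ^ 2) * rho) rho Hrabs).
  pose proof (Series_le (fun k => u (S k)) (fun n => (1 - A ^ 2) * rho * rho ^ n)) as HL.
  rewrite (is_series_unique _ _ Hg1) in HL.
  assert (u 0%nat = A) by (rewrite Hu, HwA; simpl; ring).
  assert (Series (fun k => u (S k)) <= (1 - A ^ 2) * rho / (1 - rho)).
  { apply HL. 2: eexists; exact Hg1. intro n. rewrite Hu. pose proof (pow_le rho n ltac:(lra)).
    specialize (Hw0 (S n)). specialize (HwS n). change (rho ^ S n) with (rho * rho ^ n). assert (Hp : 0 <= rho * rho ^ n) by (apply Rmult_le_pos; lra). split. apply Rmult_le_pos; lra. rewrite Rmult_assoc. apply Rmult_le_compat_r; lra. }
  unfold Rdiv in *. lra. }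
set (v := fun n => Cmod (a (S n)) ^ 2 / (1 - g) ^ (2 * S n) * rho ^ (2 * S n)).
assert (Hv : forall n, v n = (w (S n)) ^ 2 * (rho ^ 2 * (rho ^ 2) ^ n)).
{ intro n. unfold v.
  assert (E1 : (1 - g) ^ (2 * S n) = ((1 - g) ^ (S n)) ^ 2) by (rewrite <- pow_mult; f_equal; lia).
  assert (E2 : rho ^ (2 * S n) = rho ^ 2 * (rho ^ 2) ^ n) by (rewrite pow_mult; reflexivity).
  rewrite E1, E2.
  replace (Cmod (a (S n)) ^ 2 / ((1 - g) ^ S n) ^ 2) with ((Cmod (a (S n)) / (1 - g) ^ S n) ^ 2)
    by (field; apply pow_nonzero; lra).
  rewrite Hconv. reflexivity. }
assert (Hvle : forall n, 0 <= v n <= (1 - A ^ 2) ^ 2 * rho ^ 2 * (rho ^ 2) ^ n).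
{ intro n. rewrite Hv. specialize (Hw0 (S n)). specialize (HwS n).
  assert (Hp : 0 <= rho ^ 2 * (rho ^ 2) ^ n) by (apply Rmult_le_pos; [nra| apply pow_le; nra]).
  split. apply Rmult_le_pos; nra. rewrite Rmult_assoc. apply Rmult_le_compat_r; auto.
  apply pow_incr. lra. }
assert (Hg2 := geom_scal ((1 - A ^ 2) ^ 2 * rho ^ 2) (rho ^ 2) Hrabs2).
assert (Hexv : ex_series v).
{ apply (@ex_series_le R_AbsRing R_CompleteNormedModule v (fun n => (1 - A ^ 2) ^ 2 * rho ^ 2 * (rho ^ 2) ^ n)).
  intro n. change (Rabs (v n) <= (1 - A ^ 2) ^ 2 * rho ^ 2 * (rho ^ 2) ^ n). rewrite Rabs_pos_eq by apply Hvle. apply Hvle.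
  eexists; exact Hg2. }
assert (HS2 : 0 <= Series v <= (1 - A ^ 2) ^ 2 * (rho ^ 2 / (1 - rho ^ 2))).
{ split. apply Series_nonneg'; auto. intro; apply Hvle.
  replace ((1 - A ^ 2) ^ 2 * (rho ^ 2 / (1 - rho ^ 2))) with (Series (fun n => (1 - A ^ 2) ^ 2 * rho ^ 2 * (rho ^ 2) ^ n)).
  apply Series_le. intro; apply Hvle. eexists; exact Hg2.
  rewrite (is_series_unique _ _ Hg2). unfold Rdiv; ring. }
exists (Series u + (1 / (1 + A) + rho / (1 - rho)) * Series v). split.
- exists (Series u), (Series v). split; [apply Series_correct; auto|]. split; [apply Series_correct; auto|]. reflexivity.
- apply final_ineq; auto.
Qed.


Lemma part2 (g : R) (rho : R) : 0 <= g < 1 -> 1 / 3 < rho < 1 ->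
  exists (f : C -> C) (a : nat -> C), admissible g f a /\ exists L, lhs_is g rho a L /\ L > 1.
Proof.
intros Hg Hr.
set (al := (1 + (1 - rho) / (2 * rho)) / 2).
assert (Hq : 0 < (1 - rho) / (2 * rho) < 1).
{ split. apply Rdiv_lt_0_compat; lra. apply Rmult_lt_reg_r with (2 * rho). lra.
  unfold Rdiv. rewrite Rmult_assoc, Rinv_l by lra. lra. }
assert (Hal : 0 < al < 1) by (unfold al; lra).
assert (Hkey : rho * (1 + 2 * al) > 1).
{ assert (al > (1 - rho) / (2 * rho)) by (unfold al; lra).
  assert (2 * rho * al > 2 * rho * ((1 - rho) / (2 * rho))) by (apply Rmult_gt_compat_l; lra).
  replace (2 * rho * ((1 - rho) / (2 * rho))) with (1 - rho) in H0 by (field; lra). lra. }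
set (a := fun n => RtoC (bb al n * (1 - g) ^ n)).
set (f := fun z => mob al (RtoC (1 - g) * (z - cen g))%C).
exists f, a. split.
{ assert (Hz : forall z, Omega g z -> Cmod (RtoC (1 - g) * (z - cen g))%C < 1).
  { intros z Hz. unfold Omega, rad in Hz. rewrite Cmod_mult, Cmod_R, Rabs_pos_eq by lra.
    apply Rmult_lt_reg_r with (1 / (1 - g)). apply Rdiv_lt_0_compat; lra.
    replace (1 * (1 / (1 - g))) with (1 / (1 - g)) by ring.
    replace ((1 - g) * Cmod (z - cen g) * (1 / (1 - g))) with (Cmod (z - cen g)) by (field; lra). auto. }
  split.
  - intros z HO. unfold f. eapply is_series_ext. 2: apply (mob_series al _ ltac:(lra) (Hz z HO)).
    intro n. simpl. unfold a. rewrite RtoC_mult, Cpow_mult_l, <- RtoC_pow. change (pow_n (z - cen g)%C n) with (Cpow (z - cen g)%C n). ring.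
  - intros z HO. unfold f. apply mob_bound; auto. lra. }
assert (Hcm : forall n, Cmod (a n) / (1 - g) ^ n = Rabs (bb al n)).
{ intro n. unfold a. rewrite Cmod_R, Rabs_mult, (Rabs_pos_eq ((1 - g) ^ n)) by (apply pow_le; lra).
  field. apply pow_nonzero; lra. }
assert (Hbb : forall k, Rabs (bb al (S k)) = (1 - al ^ 2) * al ^ k).
{ intro k. simpl bb. rewrite Rabs_mult, Rabs_Ropp, !Rabs_pos_eq; try (apply pow_le; lra); try nra; try ring. }
set (S1 := al + (1 - al ^ 2) * rho / (1 - al * rho)).
assert (Hqa : Rabs (al * rho) < 1) by (rewrite Rabs_pos_eq; nra).
assert (HS1 : is_series (fun n => Cmod (a n) / (1 - g) ^ n * rho ^ n) S1).
{ apply is_series_decr_1.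
  pose proof (geom_scal ((1 - al ^ 2) * rho) (al * rho) Hqa) as G.
  change (is_series (fun k => Cmod (a (S k)) / (1 - g) ^ (S k) * rho ^ (S k)) (S1 + - (Cmod (a 0%nat) / (1 - g) ^ 0 * rho ^ 0))).
  replace (S1 + - (Cmod (a 0%nat) / (1 - g) ^ 0 * rho ^ 0)) with ((1 - al ^ 2) * rho / (1 - al * rho)).
  2:{ rewrite Hcm. simpl bb. rewrite Rabs_pos_eq by lra. unfold S1. simpl. field. nra. }
  eapply is_series_ext; [|exact G].
  intro k. simpl. rewrite Hcm, Hbb. rewrite Rpow_mult_distr. ring. }
set (S2 := (1 - al ^ 2) ^ 2 * rho ^ 2 / (1 - (al * rho) ^ 2)).
assert (Hqa2 : Rabs ((al * rho) ^ 2) < 1). { assert (0 <= al * rho < 1) by nra. rewrite Rabs_pos_eq by nra. simpl. nra. }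
assert (HS2 : is_series (fun n => Cmod (a (S n)) ^ 2 / (1 - g) ^ (2 * S n) * rho ^ (2 * S n)) S2).
{ pose proof (geom_scal ((1 - al ^ 2) ^ 2 * rho ^ 2) ((al * rho) ^ 2) Hqa2) as G.
  eapply is_series_ext. 2: exact G. intro n.
  assert (E1 : (1 - g) ^ (2 * S n) = ((1 - g) ^ (S n)) ^ 2) by (rewrite <- pow_mult; f_equal; lia).
  assert (E2 : rho ^ (2 * S n) = rho ^ 2 * (rho ^ 2) ^ n) by (rewrite pow_mult; reflexivity).
  rewrite E1, E2.
  replace (Cmod (a (S n)) ^ 2 / ((1 - g) ^ S n) ^ 2) with ((Cmod (a (S n)) / (1 - g) ^ S n) ^ 2)
    by (field; apply pow_nonzero; lra).
  rewrite Hcm, Hbb. rewrite <- !pow_mult, !Rpow_mult_distr, <- !pow_mult. replace (n * 2)%nat with (2 * n)%nat by lia. match goal with |- ?x = ?y => change (@eq R x y) end. ring. }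
exists (S1 + (1 / (1 + Cmod (a 0%nat)) + rho / (1 - rho)) * S2). split.
- exists S1, S2. auto.
- assert (HS1g : S1 > 1).
  { unfold S1. assert (0 < 1 - al * rho) by nra.
    assert ((1 - al ^ 2) * rho / (1 - al * rho) > 1 - al).
    { apply Rmult_gt_reg_l with (1 - al * rho); auto. unfold Rdiv.
      replace ((1 - al * rho) * ((1 - al ^ 2) * rho * / (1 - al * rho))) with ((1 - al ^ 2) * rho) by (field; lra).
      nra. }
    lra. }
  assert (HS2p : 0 <= S2).
  { unfold S2. apply Rdiv_le_0_compat. pose proof (pow2_ge_0 (1 - al ^ 2)). pose proof (pow2_ge_0 rho). nra.
    rewrite Rabs_pos_eq in Hqa2 by nra. lra. }
  assert (Hc : 0 <= 1 / (1 + Cmod (a 0%nat)) + rho / (1 - rho)).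
  { pose proof (Cmod_ge_0 (a 0%nat)). assert (0 < 1 / (1 + Cmod (a 0%nat))) by (apply Rdiv_lt_0_compat; lra).
    assert (0 < rho / (1 - rho)) by (apply Rdiv_lt_0_compat; lra). lra. }
  nra.
Qed.

Theorem theorem2p1 :
  forall g : R, 0 <= g < 1 ->
  (forall (f : C -> C) (a : nat -> C), admissible g f a ->
     forall rho : R, 0 <= rho <= 1 / 3 ->
       exists L, lhs_is g rho a L /\ L <= 1)
  /\
  (forall rho : R, 1 / 3 < rho < 1 ->
     exists (f : C -> C) (a : nat -> C), admissible g f a /\
       exists L, lhs_is g rho a L /\ L > 1).
Proof.
intros g Hg. split.
- intros f a Ha rho Hr. apply (part1 g f a rho); auto.
- intros rho Hr. apply part2; auto.
Qed.
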